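(* Let $\ell\ge2$ be an integer and let $n$ be a positive divisor of $3^\ell+1$ with $2n>3^{\lceil \ell/2\rceil}+1$. Then $\mathrm{ord}_{2n}(3)=2\ell$.
   Context: $\mathrm{ord}_M(3)$ is the multiplicative order of $3$ modulo $M$. *)

(* Defs.v *)
From mathcomp Require Import all_boot.

Definition is_mult_order (M a k : nat) : Prop :=
  0 < k /\ a ^ k = 1 %[mod M] /\
  (forall j, 0 < j -> j < k -> a ^ j <> 1 %[mod M]).

(* Main.v *)
Require Import Defs.
From mathcomp Require Import all_boot.
From mathcomp Require Import zify.

Lemma powX1 a y u m : a ^ y = 1 %[mod m] -> (a ^ y) ^ u = 1 %[mod m].
Proof. by move=> H; rewrite -modnXm H modnXm exp1n. Qed.

Lemma pow_gcd a x y m : 0 < x -> a ^ x = 1 %[mod m] -> a ^ y = 1 %[mod m] ->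
  a ^ gcdn x y = 1 %[mod m].
Proof.
move=> x0 Hx Hy; have [u _ /dvdnP [c Hc]] := Bezoutl y x0.
have E : a ^ (gcdn x y + u * y) = a ^ gcdn x y %[mod m].
  by rewrite expnD (mulnC u y) expnM -modnMmr powX1 // modnMmr muln1.
by rewrite -E Hc mulnC expnM powX1.
Qed.

Lemma mod_down a b n : a = b %[mod 2 * n] -> a = b %[mod n].
Proof.
by move=> H; rewrite -(modn_dvdm a (dvdn_mull 2 (dvdnn n))) H modn_dvdm // dvdn_mull.
Qed.

(* ceil(l/2) = (l.+1)./2 *)
Theorem lemma19 (l n : nat) :
  2 <= l -> 0 < n -> n %| 3 ^ l + 1 ->
  3 ^ (l.+1)./2 + 1 < 2 * n ->
  is_mult_order (2 * n) 3 (2 * l).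
Proof.
move=> l2 n0 hdiv hbig.
have p1 : 0 < 3 ^ l by rewrite expn_gt0.
have H2l : 3 ^ (2 * l) = 1 %[mod 2 * n].
  have D : 2 * n %| (3 ^ l - 1) * (3 ^ l + 1).
    apply: dvdn_mul => //; rewrite dvdn2 oddB // oddX /=; by case: (l == 0).
  move/dvdnP: D => [q Hq].
  have -> : 3 ^ (2 * l) = q * (2 * n) + 1.
    rewrite -Hq mulnC expnM. rewrite (_ : (3 ^ l) ^ 2 = 3 ^ l * 3 ^ l) //.
    rewrite mulnDr muln1 mulnBl mul1n. (timeout 20 nia).
  by rewrite modnMDl.
split; first by move: l2; clear; timeout 20 lia. split; first exact: H2l.
move=> j j0 jl Hj.
have g0 : 0 < gcdn (2 * l) j by rewrite gcdn_gt0 j0 orbT.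
have l0 : 0 < 2 * l by move: l2; clear; timeout 20 lia.
have Hg' := @pow_gcd 3 (2 * l) j (2 * n) l0 H2l Hj.
set g := gcdn (2 * l) j in g0 Hg'.
have gle : g <= j by apply: dvdn_leq => //; apply: dvdn_gcdr.
have /dvdnP [k Hk] : g %| 2 * l by apply: dvdn_gcdl.
have hx : 1 <= (l.+1)./2 by move: l2; clear; timeout 20 lia.
have hpx : 3 <= 3 ^ (l.+1)./2.
  by rewrite -[X in X <= _]expn1; apply: leq_pexp2l.
case: (boolP (odd k)) => kodd; last first.
  have Ek := odd_double_half k; rewrite (negbTE kodd) add0n in Ek.
  have El : l = k./2 * g by move: Ek Hk; clear; generalize (k./2) => h; timeout 20 nia.
  have H1 : 3 ^ l = 1 %[mod 2 * n] by rewrite El mulnC expnM powX1.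
  have H1n := mod_down _ _ _ H1.
  have : n %| 3 ^ l - 1.
    by rewrite -eqn_mod_dvd //; apply/eqP.
  move=> d1; have : n %| (3 ^ l + 1) - (3 ^ l - 1) by apply: dvdn_sub.
  rewrite (_ : 3 ^ l + 1 - (3 ^ l - 1) = 2); last by move: p1; clear; generalize (3 ^ l) => x; timeout 20 lia.
  move/dvdn_leq => /(_ isT) nle. move: nle hbig hpx; clear; generalize (3 ^ (l.+1)./2) => x; timeout 20 lia.
have Ek := odd_double_half k; rewrite kodd in Ek.
have gev : ~~ odd g.
  apply/negP => og. have : odd (k * g) by rewrite oddM kodd og.
  by rewrite -Hk oddM.
have Eg := odd_double_half g; rewrite (negbTE gev) add0n in Eg.
set e := g./2 in Eg. set h := k./2 in Ek.
have h1 : 1 <= h.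
  move: Ek Eg Hk jl gle g0; clear -g; rewrite -/g; generalize h e => h' e'; timeout 20 nia.
have El : l = e + (2 * e) * h by move: Ek Eg Hk; clear -g; rewrite -/g; generalize h e => h' e'; timeout 20 nia.
have He : 3 ^ (2 * e) = 1 %[mod n].
  apply: mod_down; rewrite -Hg'; by rewrite mul2n Eg.
have Hl : 3 ^ l = 3 ^ e %[mod n].
  by rewrite El expnD expnM -modnMmr powX1 // modnMmr muln1.
have : n %| 3 ^ e + 1.
  rewrite /dvdn -modnDml -Hl modnDml. by move: hdiv; rewrite /dvdn.
move/dvdn_leq; rewrite addn1 ltn0Sn => /(_ isT) nle.
have ex : e.+1 <= (l.+1)./2 by move: El h1 g0 Eg; clear -g; rewrite -/g; generalize e h => e' h'; timeout 20 nia.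
have := leq_pexp2l (isT : 0 < 3) ex.
rewrite expnS. have := expn_gt0 3 e. move: nle hbig; clear; generalize (3 ^ e) (3 ^ (l.+1)./2) => x y; timeout 20 lia.
Qed.
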